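(* Let $M(i)$ be a maximal matching of $G(i)$, let $V_{cover}(i)$ be the set of endpoints of edges of $M(i)$, let $j\ge i$, and let $V'=V_{cover}(i\rightarrow j)$. Let $G'$ be the subgraph of $G(j)$ consisting of all edges of $G(j)$ between vertices of $V'$, together with, for each vertex $u\in V'$, up to $|V'|+1$ arbitrary edges of $G(j)$ from $u$ to vertices in $V\setminus V'$ (all such edges if there are fewer). Then for any maximal matching $M'$ of $G'$, the set of endpoints of edges of $M'$ is a vertex cover of $G(j)$ whose size is at most twice the size of a minimum vertex cover of $G(j)$.
   Context: A graph on vertex set $V$ undergoes a sequence of updates numbered $1,2,\dots$, each inserting or deleting one edge; $G(i)$ is the graph after the $i$-th update. A matching is maximal if no edge of the graph has both endpoints unmatched. $V_{cover}(i\rightarrow j)$ is obtained from $V_{cover}(i)$ by adding all endpoints of edges inserted during updates $i+1,\dots,j$; it is a vertex cover of $G(j)$. *)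

(* Defs.v *)
(* Graphs on a finite vertex set V: an (undirected, simple)
   graph is its edge set, a set of 2-element subsets of V. *)
From mathcomp Require Import all_boot.
Set Implicit Arguments. Unset Strict Implicit. Unset Printing Implicit Defensive.

Section Defs.
Variable V : finType.

Definition is_graph (E : {set {set V}}) : Prop :=
  forall e, e \in E -> #|e| = 2.

Definition update_step (E E' : {set {set V}}) : Prop :=
  exists e : {set V}, #|e| = 2 /\
    ((e \notin E /\ E' = e |: E) \/ (e \in E /\ E' = E :\ e)).

Definition endpoints (M : {set {set V}}) : {set V} := \bigcup_(e in M) e.

Definition is_matching (E M : {set {set V}}) : Prop :=
  M \subset E /\
  forall e f, e \in M -> f \in M -> e != f -> [disjoint e & f].

Definition maximal_matching (E M : {set {set V}}) : Prop :=
  is_matching E M /\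
  forall e, e \in E -> ~ (e \subset ~: endpoints M).

Definition vertex_cover (E : {set {set V}}) (C : {set V}) : Prop :=
  forall e, e \in E -> exists2 v, v \in e & v \in C.

Definition min_vc_size (E : {set {set V}}) : nat :=
  \big[minn/#|V|]_(C : {set V} | [forall e in E, e :&: C != set0]) #|C|.

(* edges inserted during updates i+1, ..., j of the sequence G
   (G k is the graph after the k-th update, G 0 the initial graph) *)
Definition inserted_edges (G : nat -> {set {set V}}) (i j : nat)
  : {set {set V}} :=
  \bigcup_(i.+1 <= k < j.+1) (G k :\: G k.-1).

Definition Vcover_to (G : nat -> {set {set V}}) (Vc : {set V}) (i j : nat)
  : {set V} :=
  Vc :|: endpoints (inserted_edges G i j).

Definition inner_edges (E : {set {set V}}) (W : {set V}) : {set {set V}} :=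
  [set e in E | e \subset W].

Definition cross_edges (E : {set {set V}}) (W : {set V}) (u : V)
  : {set {set V}} :=
  [set e in E | (u \in e) && ~~ (e \subset W)].

Definition sparsified (E : {set {set V}}) (W : {set V})
  (S : V -> {set {set V}}) : {set {set V}} :=
  inner_edges E W :|: \bigcup_(u in W) S u.

Definition valid_selection (E : {set {set V}}) (W : {set V})
  (S : V -> {set {set V}}) : Prop :=
  forall u, u \in W ->
    S u \subset cross_edges E W u /\
    #|S u| = minn #|cross_edges E W u| (#|W|).+1.

End Defs.

(* Main.v *)
Require Import Defs.
From mathcomp Require Import all_boot.
From mathcomp Require Import zify.
Set Implicit Arguments. Unset Strict Implicit. Unset Printing Implicit Defensive.

Lemma card_bigcup_le (T I : finType) (A : {set I}) (F : I -> {set T}) :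
  #|\bigcup_(a in A) F a| <= \sum_(a in A) #|F a|.
Proof.
rewrite -big_enum -(big_enum _ _ A).
elim: (enum A) => [|a r IH]; first by rewrite !big_nil cards0.
rewrite !big_cons cardsU; apply: leq_trans (leq_subr _ _) _.
by rewrite leq_add2l.
Qed.

Lemma card_bigcup_disj (T I : finType) (A : {set I}) (F : I -> {set T}) :
  (forall a b, a \in A -> b \in A -> a != b -> [disjoint F a & F b]) ->
  \sum_(a in A) #|F a| = #|\bigcup_(a in A) F a|.
Proof.
move=> H; rewrite -big_enum -(big_enum _ _ A).
have: uniq (enum A) by apply: enum_uniq.
have: forall a, a \in enum A -> a \in A by move=> a; rewrite mem_enum.
elim: (enum A) => [|a r IH] Hr Hu; first by rewrite !big_nil cards0.
rewrite !big_cons; case/andP: Hu => Har Hu.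
rewrite (IH _ Hu); last by move=> b hb; apply Hr; rewrite inE hb orbT.
rewrite cardsU.
have -> : F a :&: \bigcup_(b <- r) F b = set0.
  apply/eqP; rewrite setI_eq0 bigcup_seq; apply: bigcup_disjoint => b hb.
  apply: H; [apply: Hr; exact: mem_head | by apply: Hr; rewrite inE hb orbT |].
  by apply/eqP => eab; rewrite eab hb in Har.
by rewrite cards0 subn0.
Qed.

Lemma matching_card_le (T : finType) (M : {set {set T}}) (X : {set T}) :
  (forall e f, e \in M -> f \in M -> e != f -> [disjoint e & f]) ->
  (forall e, e \in M -> e :&: X != set0) -> #|M| <= #|X|.
Proof.
move=> Hd Hx.
have -> : #|M| = \sum_(e in M) 1 by rewrite sum1_card.
apply: (@leq_trans (\sum_(e in M) #|e :&: X|)).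
  by apply: leq_sum => e he; rewrite card_gt0 Hx.
rewrite card_bigcup_disj.
  by apply: subset_leq_card; apply/bigcupsP => e _; apply: subsetIr.
move=> a b ha hb hab; apply: (disjointWl (subsetIl _ _)).
rewrite disjoint_sym; apply: (disjointWl (subsetIl _ _)); rewrite disjoint_sym.
exact: Hd.
Qed.

Lemma graph_all (V : finType) (G : nat -> {set {set V}})
  (HG0 : is_graph (G 0)) (Hupd : forall k, update_step (G k) (G k.+1)) k :
  is_graph (G k).
Proof.
elim: k => // k IH e.
have [x [hx [[_ ->]|[_ ->]]]] := Hupd k.
  by rewrite in_setU1 => /orP[/eqP ->|]; [|apply: IH].
by rewrite in_setD1 => /andP[_]; apply: IH.
Qed.

Lemma bigcup_seqP' (T : finType) (I : eqType) (r : seq I) (F : I -> {set T}) x :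
  reflect (exists2 k, k \in r & x \in F k) (x \in \bigcup_(k <- r) F k).
Proof.
apply: (iffP idP).
  elim: r => [|a r IH]; first by rewrite big_nil inE.
  rewrite big_cons in_setU => /orP[h|/IH[k hk h]].
    by exists a; rewrite ?mem_head.
  by exists k; rewrite // inE hk orbT.
case=> k; elim: r => [|a r IH] //.
rewrite inE big_cons in_setU => /orP[/eqP -> ->//|hk hx].
by rewrite IH ?orbT.
Qed.

Lemma inserted_mem (V : finType) (G : nat -> {set {set V}}) i d e :
  e \in G (i + d) -> e \in G i \/ e \in inserted_edges G i (i + d).
Proof.
rewrite /inserted_edges.
elim: d e => [|d IH] e; first by rewrite addn0; left.
move=> he; case: (boolP (e \in G (i + d))) => h.
  case: (IH e h) => [|/bigcup_seqP'[k hk he2]]; first by left.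
  right; apply/bigcup_seqP'; exists k => //.
  move: hk; rewrite !mem_index_iota => /andP[a b]; apply/andP; split; lia.
right; apply/bigcup_seqP'; exists (i + d.+1).
  rewrite mem_index_iota; apply/andP; split; lia.
by rewrite addnS /= inE h -addnS he.
Qed.

Theorem lemma13 (V : finType) (G : nat -> {set {set V}})
  (HG0 : is_graph (G 0)) (Hupd : forall k, update_step (G k) (G k.+1))
  (i j : nat) (Hij : i <= j)
  (M : {set {set V}}) (HM : maximal_matching (G i) M)
  (S : V -> {set {set V}})
  (HS : valid_selection (G j) (Vcover_to G (endpoints M) i j) S)
  (M' : {set {set V}})
  (HM' : maximal_matching
           (sparsified (G j) (Vcover_to G (endpoints M) i j) S) M') :
  vertex_cover (G j) (endpoints M') /\
  #|endpoints M'| <= 2 * min_vc_size (G j).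
Proof.
set W := Vcover_to G (endpoints M) i j.
set E' := sparsified (G j) W S.
have Hgj := graph_all HG0 Hupd (k:=j).
case: HM' => [[HsubM' Hdisj] Hmax].
have HM'gj : forall e, e \in M' -> e \in G j.
  move=> e he; case/setUP: (subsetP HsubM' e he) => [/setIdP[hg _] // | /bigcupP[u hu hsu]].
  have [hsub _] := HS u hu.
  by move: (subsetP hsub e hsu); rewrite inE => /andP[].
have Hwcov : forall e, e \in G j -> exists2 u, u \in e & u \in W.
  move=> e he; have := @inserted_mem V G i (j - i) e; rewrite subnKC //.
  case/(_ he) => h.
    case: HM => _ Hm; move/negP: (Hm e h) => /subsetPn [v hv hv'].
    rewrite in_setC negbK in hv'.
    by exists v => //; rewrite /W /Vcover_to in_setU hv'.
  have : 0 < #|e| by rewrite (Hgj e he).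
  case/card_gt0P => v hv; exists v => //.
  rewrite /W /Vcover_to in_setU; apply/orP; right; apply/bigcupP; by exists e.
have Hedge : forall e, e \in M' -> exists2 w, w \in e & w \in W.
  move=> e he; case/setUP: (subsetP HsubM' e he) => [/setIdP[hg hs] | /bigcupP[u hu hsu]].
    have : 0 < #|e| by rewrite (Hgj e hg).
    case/card_gt0P => v hv; exists v => //; exact: (subsetP hs).
  have [hsub _] := HS u hu.
  move: (subsetP hsub e hsu); rewrite inE => /andP[_ /andP[hue _]].
  by exists u.
have HcardM' := matching_card_le Hdisj.
have HO : #|endpoints M' :&: ~: W| <= #|M'|.
  apply: (@leq_trans (\sum_(e in M') #|e :&: ~: W|)).
    apply: leq_trans (card_bigcup_le M' (fun e => e :&: ~: W)).
    apply: subset_leq_card; apply/subsetP => x; rewrite inE => /andP[/bigcupP[e he hx] hw].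
    by apply/bigcupP; exists e; rewrite // inE hx hw.
  rewrite -sum1_card; apply: leq_sum => e he.
  have [w hw hwW] := Hedge e he.
  apply: (@leq_trans #|e :\ w|).
    apply: subset_leq_card; apply/subsetP => x; rewrite in_setI in_setC in_setD1 => /andP[hx hxW].
    rewrite hx andbT; apply/eqP => exw; move: hxW; by rewrite exw hwW.
  move: (cardsD1 w e); rewrite hw (Hgj e (HM'gj e he)) /= => h; lia.
split.
  move=> e he; have [u hue huW] := Hwcov e he.
  case: (boolP (e :&: endpoints M' == set0)) => hint; last first.
    by case/set0Pn: hint => v; rewrite inE => /andP[h1 h2]; exists v.
  exfalso.
  have HnotE' : e \notin E'.
    apply/negP => heE; apply: (Hmax e heE); apply/subsetP => x hx; rewrite inE.
    apply/negP => hxm; have := eqP hint; move/setP/(_ x); by rewrite !inE hx hxm.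
  have heW : ~~ (e \subset W).
    apply: contra HnotE' => hs; rewrite in_setU; apply/orP; left; by rewrite inE he hs.
  have hcross : e \in cross_edges (G j) W u by rewrite inE he hue heW.
  have [hSsub hScard] := HS u huW.
  have heS : e \notin S u.
    apply: contra HnotE' => h; rewrite in_setU; apply/orP; right; apply/bigcupP; by exists u.
  have hlt : #|S u| < #|cross_edges (G j) W u|.
    by apply: proper_card; apply/properP; split => //; exists e.
  have hSW : #|S u| = #|W|.+1.
    move: hlt hScard; rewrite /W; set c := #|cross_edges _ _ _|; set w := #|Vcover_to _ _ _ _|.
    move=> h1 h2; rewrite h2; move: h1; rewrite h2 /minn; case: (ltnP c w.+1) => h3 h4 //.
    by rewrite ltnn in h4.
  have hu_un : u \notin endpoints M'.
    apply/negP => h; move/eqP/setP: hint => /(_ u); by rewrite !inE hue h.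
  have inj : {in S u &, injective (fun f => f :\ u)}.
    move=> f g hf hg /= hfg.
    move: (subsetP hSsub f hf) (subsetP hSsub g hg); rewrite !inE.
    move=> /andP[_ /andP[huf _]] /andP[_ /andP[hug _]].
    by rewrite -(setD1K huf) -(setD1K hug) hfg.
  have hSO : #|S u| <= #|endpoints M' :&: ~: W|.
    rewrite -(card_in_imset inj) -(card_imset _ (@set1_inj V)).
    apply: subset_leq_card; apply/subsetP => _ /imsetP[f hf ->].
    have hfE' : f \in E' by rewrite in_setU; apply/orP; right; apply/bigcupP; exists u.
    move/negP: (Hmax f hfE') => /subsetPn [v hvf hvm]; rewrite in_setC negbK in hvm.
    have hvu : v != u by apply/eqP => evu; move: hu_un; rewrite -evu hvm.
    move: (subsetP hSsub f hf); rewrite inE => /andP[hfg /andP[huf hfW]].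
    have hfc : #|f :\ u| == 1.
      by move: (cardsD1 u f); rewrite huf (Hgj f hfg) /= add1n => -[<-].
    case/cards1P: hfc => x hx.
    have : v \in f :\ u by rewrite in_setD1 hvu hvf.
    rewrite hx in_set1 => /eqP evx; subst x.
    apply/imsetP; exists v => //; rewrite in_setI in_setC hvm /=.
    apply: contra hfW => hvW; rewrite -(setD1K huf) hx.
    by apply/subsetP => y; rewrite in_setU1 in_set1 => /orP[/eqP->|/eqP->].
  have hMW : #|M'| <= #|W|.
    apply: HcardM' => e0 he0; have [w hw hwW] := Hedge e0 he0.
    by apply/set0Pn; exists w; rewrite inE hw hwW.
  by have := leq_trans (leq_trans hSO HO) hMW; rewrite hSW ltnn.
have Hsz : #|endpoints M'| <= 2 * #|M'|.
  rewrite /endpoints; apply: leq_trans (card_bigcup_le _ _) _.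
  rewrite (eq_bigr (fun _ => 2)) => [|e he]; last exact: (Hgj e (HM'gj e he)).
  by rewrite sum_nat_const mulnC.
rewrite /min_vc_size.
apply: (big_ind (fun y => #|endpoints M'| <= 2 * y)).
- by apply: leq_trans (max_card _) _; rewrite mul2n -addnn leq_addr.
- by move=> x y hx hy; rewrite /minn; case: ifP.
- move=> C hC; apply: leq_trans Hsz _; rewrite leq_mul2l; apply/orP; right.
  apply: HcardM' => e he; move/forall_inP: hC; apply; exact: HM'gj.
Qed.
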